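(* Let $(X,d)$, $(\Lambda,d_\Lambda)$ be compact metric spaces, $\tau:\Lambda\times X\to X$ continuous and $q:X\to\mathcal P(\Lambda)$ continuous. Assume: (M1) there is $s>0$ such that $\int_\Lambda|f(\tau(\lambda,x))-f(\tau(\lambda,y))|\,dq_x(\lambda)\le s\,d(x,y)$ for all $x,y\in X$ and all $f\in\mathrm{Lip}_1(X)$; (H2) there is $r\ge0$ with $d(\tau(\lambda_1,x),\tau(\lambda_2,x))\le r\,d_\Lambda(\lambda_1,\lambda_2)$ for all $\lambda_1,\lambda_2\in\Lambda$, $x\in X$; (H3) there is $t\ge0$ with $d_{MK}(q_x,q_y)\le t\,d(x,y)$ for all $x,y\in X$. Then there exists $c>0$ such that for every $f\in\mathrm{Lip}_1(X)$, the function $B_q(f)$ is $c$-Lipschitz on $X$.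
   Context: $\mathcal{P}(Y)$ is the set of Borel probability measures on a compact metric space $Y$, with $d_{MK}(\mu,\nu)=\sup_{f\in \mathrm{Lip}_1(Y)}\{\int f\,d\mu-\int f\,d\nu\}$, where $\mathrm{Lip}_1(Y)$ is the set of real $1$-Lipschitz functions on $Y$. The transfer operator is $B_q(f)(x)=\int_\Lambda f(\tau(\lambda,x))\,dq_x(\lambda)$. *)

(* Defs.v *)
From HB Require Import structures.
From mathcomp Require Import all_boot all_order all_algebra.
From mathcomp Require Import all_classical all_reals all_analysis.
Set Implicit Arguments. Unset Strict Implicit. Unset Printing Implicit Defensive.
Import Order.TTheory GRing.Theory Num.Theory.
Local Open Scope classical_set_scope.
Local Open Scope ring_scope.

Section MetricDefs.
Context {R : realType}.

Definition is_metric (T : Type) (d : T -> T -> R) : Prop :=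
  [/\ (forall x y, 0 <= d x y),
      (forall x y, d x y = 0 <-> x = y),
      (forall x y, d x y = d y x) &
      (forall x y z, d x z <= d x y + d y z)].

Definition metric_open (T : Type) (d : T -> T -> R) (A : set T) : Prop :=
  forall x, A x -> exists e : R, 0 < e /\ forall y, d x y < e -> A y.

Definition metric_compact (T : Type) (d : T -> T -> R) : Prop :=
  forall (I : Type) (U : I -> set T),
    (forall i, metric_open d (U i)) -> setT `<=` \bigcup_(i in setT) U i ->
    exists F : set I, finite_set F /\ setT `<=` \bigcup_(i in F) U i.

Definition borel_for (dT : measure_display) (T : measurableType dT)
  (d : T -> T -> R) : Prop :=
  forall A : set T, measurable A <-> smallest (sigma_algebra setT) (metric_open d) A.

Definition metric_continuous (A B : Type) (dA : A -> A -> R) (dB : B -> B -> R)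
  (f : A -> B) : Prop :=
  forall x (e : R), 0 < e -> exists del : R, 0 < del /\
    forall y, dA x y < del -> dB (f x) (f y) < e.

Definition real_dist (a b : R) : R := `|a - b|.

Definition metric_continuous2 (L X : Type) (dL : L -> L -> R) (dX : X -> X -> R)
  (tau : L -> X -> X) : Prop :=
  forall l x (e : R), 0 < e -> exists del : R, 0 < del /\
    forall l' x', dL l l' < del -> dX x x' < del ->
      dX (tau l x) (tau l' x') < e.

Definition Lip1 (T : Type) (d : T -> T -> R) (f : T -> R) : Prop :=
  forall x y, `|f x - f y| <= d x y.

Definition lipschitz_with (T : Type) (d : T -> T -> R) (c : R) (f : T -> R) : Prop :=
  forall x y, `|f x - f y| <= c * d x y.

Definition dMK (dT : measure_display) (T : measurableType dT) (d : T -> T -> R)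
  (mu nu : probability T R) : \bar R :=
  ereal_sup [set ((Rintegral mu setT f - Rintegral nu setT f)%:E) | f in Lip1 d].

Definition Bq (dL : measure_display) (L : measurableType dL) (X : Type)
  (q : X -> probability L R) (tau : L -> X -> X) (f : X -> R) (x : X) : R :=
  Rintegral (q x) setT (fun l => f (tau l x)).

End MetricDefs.

(* Main.v *)
Require Import Defs.
From HB Require Import structures.
From mathcomp Require Import all_boot all_order all_algebra.
From mathcomp Require Import all_classical all_reals all_analysis.
From mathcomp Require Import ring lra.
Import Order.TTheory GRing.Theory Num.Theory.
Local Open Scope classical_set_scope.
Local Open Scope ring_scope.

Lemma lip_measurable (R : realType) (dLd : measure_display) (L : measurableType dLd)
  (dL : L -> L -> R) (g : L -> R) (K : R) :
  is_metric dL -> borel_for dL -> 0 <= K ->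
  (forall a b, `|g a - g b| <= K * dL a b) -> measurable_fun setT g.
Proof.
move=> [d0 _ _ _] hb K0 hg.
apply: (measurability _ (measurable_realfun.RGenOInfty.measurableE R)) => //.
move=> /= _ [_ [x ->] <-]; rewrite setTI; apply/hb; apply: sub_gen_smallest.
move=> l /=; rewrite in_itv /= andbT => xl.
exists ((g l - x) / (K + 1)); split.
  by apply: divr_gt0; [rewrite subr_gt0|lra].
move=> l' hl'; rewrite /= in_itv /= andbT.
have := hg l l'; have := d0 l l'.
have K1 : 0 < K + 1 by lra.
rewrite ltr_pdivlMr // in hl'.
move=> h0 h1.
have : `|g l - g l'| < g l - x.
  apply: (le_lt_trans h1); apply: le_lt_trans hl'.
  by rewrite mulrC ler_wpM2l //; lra.
move=> h2; have := ler_norm (g l - g l'); lra.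
Qed.

Lemma compact_bounded (R : realType) (X : Type) (d : X -> X -> R) (z : X) :
  is_metric d -> metric_compact d -> exists M : R, forall w, d z w <= M.
Proof.
move=> [d0 _ _ dtri] hc.
have := hc nat (fun n => [set w | d z w < n%:R]).
case.
- move=> n w /= hw; exists (n%:R - d z w); split; first by rewrite subr_gt0.
  move=> v hv /=; have := dtri z w v; lra.
- move=> w _; exists (Num.bound (d z w)) => //=; exact: archi_boundP.
move=> F [/finite_fsetP [B ->] hF].
exists (\big[maxn/0%N]_(i <- finmap.enum_fset B) i)%:R => w.
have [i /= iB hi] := hF w I.
apply/ltW/(lt_le_trans hi); rewrite ler_nat.
by rewrite (big_rem i) //= leq_maxl.
Qed.

Theorem mainTheorem6 (R : realType)
  (dXd : measure_display) (X : measurableType dXd) (d : X -> X -> R)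
  (dLd : measure_display) (L : measurableType dLd) (dL : L -> L -> R)
  (tau : L -> X -> X) (q : X -> probability L R) :
  is_metric d -> metric_compact d -> borel_for d ->
  is_metric dL -> metric_compact dL -> borel_for dL ->
  metric_continuous2 dL d tau ->
  (* q : X -> P(Lambda) continuous for the weak topology on P(Lambda) *)
  (forall g : L -> R, metric_continuous dL real_dist g ->
     metric_continuous d real_dist (fun x => Rintegral (q x) setT g)) ->
  (* (M1) *)
  (exists s : R, 0 < s /\ forall x y (f : X -> R), Lip1 d f ->
     (\int[q x]_(l in setT) (`|f (tau l x) - f (tau l y)|)%:E <= (s * d x y)%:E)%E) ->
  (* (H2) *)
  (exists r : R, 0 <= r /\ forall l1 l2 x, d (tau l1 x) (tau l2 x) <= r * dL l1 l2) ->
  (* (H3) *)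
  (exists t : R, 0 <= t /\ forall x y, (dMK dL (q x) (q y) <= (t * d x y)%:E)%E) ->
  exists c : R, 0 < c /\ forall f : X -> R, Lip1 d f -> lipschitz_with d c (Bq q tau f).
Proof.
move=> hd hcX hbX hdL hcL hbL _ _ [s [s0 hM1]] [r [r0 hH2]] [t [t0 hH3]].
have r1 : 0 < r + 1 by lra.
have rt0 : 0 <= (r + 1) * t by apply: mulr_ge0 => //; lra.
exists (s + (r + 1) * t); split; first by lra.
move=> f hf.
have Flip : forall z a b, `|f (tau a z) - f (tau b z)| <= r * dL a b.
  by move=> z a b; apply: le_trans (hf _ _) (hH2 a b z).
have Fint : forall z (mu : probability L R),
    mu.-integrable setT (EFin \o (fun l => f (tau l z))).
  move=> z mu; apply: measurable_bounded_integrable => //.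
  - by apply: le_lt_trans (probability_le1 mu measurableT) _; rewrite ltry.
  - exact: (@lip_measurable R dLd L dL _ r hdL hbL r0 (Flip z)).
  have [M hM] := @compact_bounded _ _ _ z hd hcX.
  exists (`|f z| + M); split; first by rewrite num_real.
  move=> M' hM' l _.
  have h1 := hf z (tau l z); have h2 := hM (tau l z).
  have h3 : `|f (tau l z)| <= `|f z| + `|f z - f (tau l z)|.
    by rewrite -[X in `|X|](subKr (f z)) ler_normB.
  rewrite /=; lra.
have key : forall x y, Bq q tau f x - Bq q tau f y <= (s + (r + 1) * t) * d x y.
  move=> x y; rewrite /Bq.
  set Fx := fun l => f (tau l x); set Fy := fun l => f (tau l y).
  have iFx : (q x).-integrable setT (EFin \o Fx) by exact: Fint.
  have iFy : (q x).-integrable setT (EFin \o Fy) by exact: Fint.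
  have iFy' : (q y).-integrable setT (EFin \o Fy) by exact: Fint.
  have iD : (q x).-integrable setT (EFin \o (fun l => Fx l - Fy l)).
    exact: (integrableB measurableT iFx iFy).
  have e1 : \int[q x]_(l in setT) Fx l - \int[q x]_(l in setT) Fy l =
            \int[q x]_(l in setT) (Fx l - Fy l) by rewrite RintegralB.
  have b1 : \int[q x]_(l in setT) (Fx l - Fy l) <= s * d x y.
    apply: (@le_trans _ _ (\int[q x]_(l in setT) `|Fx l - Fy l|)).
      apply: le_Rintegral => //; first exact: (integrable_norm iD).
      by move=> l _; exact: ler_norm.
    rewrite -lee_fin /Rintegral fineK; first exact: hM1.
    by have := integrable_fin_num measurableT (integrable_norm iD).
  set h := fun l => Fy l * (r + 1)^-1.
  have hh : Lip1 dL h.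
    move=> a b; rewrite /h -mulrBl normrM [`|(r + 1)^-1|]gtr0_norm ?invr_gt0 //.
    rewrite ler_pdivrMr //; apply: le_trans (Flip y a b) _.
    by rewrite mulrDr mulr1 mulrC lerDl; case: hdL => ->.
  have b2' : ((\int[q x]_(l in setT) h l - \int[q y]_(l in setT) h l)%:E
             <= (t * d x y)%:E)%E.
    apply: le_trans (hH3 x y); apply: ereal_sup_ubound; by exists h.
  rewrite lee_fin /h !RintegralZr // -mulrBl ler_pdivrMr // in b2'.
  have := e1; have := b1; have := b2'.
  have -> : (s + (r + 1) * t) * d x y = s * d x y + t * d x y * (r + 1) by ring.
  lra.
move=> x y; rewrite ler_norml; apply/andP; split; last exact: key.
have := key y x; have -> : d y x = d x y by case: hd => _ _ -> _.
lra.
Qed.
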